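(* Let $D$ be an $n\times n$ distance matrix and let $q_0$ be the smallest $q\in\mathbb N$ such that $D^{(q)}=D$. Then every graph realisation $(G=(V,E),\Phi)$ of $D$ satisfies $|V|\ge n+(q_0-1)$.
   Context: $[n]=\{1,\dots,n\}$. An $n\times n$ matrix $D$ with non-negative integer entries is a distance matrix if (i) $D_{ii}=0$ for all $i$ and $D_{ij}>0$ for all $i\ne j$; (ii) $D$ is symmetric; (iii) $D_{iw}+D_{wj}\ge D_{ij}$ for all $i,j,w\in[n]$. For $q\in\mathbb N$, the $q$-skeleton $G^q$ of $D$ is the edge-weighted graph with vertex set $[n]$ having an edge $\{i,j\}$ ($i<j$) if and only if $D_{ij}\le q$, this edge having weight (length) $D_{ij}$. $D^{(q)}$ denotes the $n\times n$ matrix whose $(i,j)$ entry is the weighted shortest-path distance between $i$ and $j$ in $G^q$ (equal to $\infty$ if no path exists). A graph realisation of $D$ is a pair $(G,\Phi)$, where $G=(V,E)$ is a finite simple undirected unweighted graph and $\Phi:[n]\to V$ is an injective map such that $d_G(\Phi(i),\Phi(j))=D_{ij}$ for all $i,j\in[n]$; here $d_G$ denotes the shortest-path distance in $G$ (equal to $\infty$ if no path exists). *)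

(* Defs.v *)
From mathcomp Require Import all_boot all_algebra.
Set Implicit Arguments. Unset Strict Implicit. Unset Printing Implicit Defensive.

(* Distances and weights are natural numbers; "infinity" (no path) is encoded
   by [None] in an [option nat]. *)

Definition is_distance_matrix (n : nat) (D : 'M[nat]_n) : Prop :=
  [/\ (forall i, D i i = 0),
      (forall i j, i != j -> 0 < D i j),
      (forall i j, D i j = D j i) &
      (forall i j w, D i j <= D i w + D w j)].

Definition skel_edge (n : nat) (D : 'M[nat]_n) (q : nat) (i j : 'I_n) : bool :=
  (i != j) && (D i j <= q).

Fixpoint walk_weight (n : nat) (D : 'M[nat]_n) (x : 'I_n) (p : seq 'I_n) : nat :=
  if p is y :: p' then D x y + walk_weight D y p' else 0.

Definition skel_walk (n : nat) (D : 'M[nat]_n) (q : nat) (x y : 'I_n) (p : seq 'I_n) : bool :=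
  path (skel_edge D q) x p && (last x p == y).

(** [skel_dist_is D q i j d] : the (i,j) entry of D^(q), i.e. the weighted
    shortest-path distance from i to j in G^q, equals d (None = infinity). *)
Definition skel_dist_is (n : nat) (D : 'M[nat]_n) (q : nat) (i j : 'I_n) (d : option nat) : Prop :=
  match d with
  | Some m => (exists p, skel_walk D q i j p /\ walk_weight D i p = m) /\
              (forall p, skel_walk D q i j p -> m <= walk_weight D i p)
  | None => forall p, ~~ skel_walk D q i j p
  end.

Definition skeleton_reproduces (n : nat) (D : 'M[nat]_n) (q : nat) : Prop :=
  forall i j, skel_dist_is D q i j (Some (D i j)).

Definition simple_graph (V : finType) (e : rel V) : Prop :=
  symmetric e /\ irreflexive e.

Definition graph_dist_is (V : finType) (e : rel V) (x y : V) (d : option nat) : Prop :=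
  match d with
  | Some m => (exists p, path e x p /\ last x p = y /\ size p = m) /\
              (forall p, path e x p -> last x p = y -> m <= size p)
  | None => forall p, path e x p -> last x p <> y
  end.

Definition graph_realisation (n : nat) (D : 'M[nat]_n) (V : finType) (e : rel V)
    (Phi : 'I_n -> V) : Prop :=
  [/\ simple_graph e, injective Phi &
      forall i j, graph_dist_is e (Phi i) (Phi j) (Some (D i j))].

(* Main.v *)
Require Import Defs.
From mathcomp Require Import all_boot all_algebra.
From Stdlib Require Import Classical.
From mathcomp Require Import zify.

Lemma walk_weight_ge (n : nat) (D : 'M[nat]_n) :
  is_distance_matrix D -> forall p x, D x (last x p) <= walk_weight D x p.
Proof.
case=> D0 _ _ Dtri; elim=> [|y p IH] x /=; first by rewrite D0.
apply: leq_trans (Dtri x (last y p) y) _; rewrite leq_add2l; exact: IH.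
Qed.

Lemma count_take_find (V : eqType) (a : pred V) (p : seq V) :
  count (predC a) (take (find a p) p) = find a p.
Proof.
elim: p => [|x p IH] //=; case: ifP => ax //=; by rewrite ax IH.
Qed.

Lemma key (n : nat) (D : 'M[nat]_n) (V : finType) (e : rel V) (Phi : 'I_n -> V) (q : nat) (j : 'I_n) :
  injective Phi ->
  (forall i j, graph_dist_is e (Phi i) (Phi j) (Some (D i j))) ->
  forall p k, path e (Phi k) p -> last (Phi k) p = Phi j ->
  (q <= count (fun v => v \notin codom Phi) p) \/
  exists w, skel_walk D q k j w /\ walk_weight D k w <= size p.
Proof.
move=> Pinj Gd p; elim: {p}(size p) {-2}p (leqnn (size p)) => [|N IH] p.
  rewrite leqn0 => /nilP -> k _ /= Hl; right; exists [::].
  by split=> //; rewrite /skel_walk /= (Pinj _ _ Hl).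
case: p => [|y p'] Hsz k Hp Hl.
  right; exists [::].
  by split=> //; rewrite /skel_walk /= (Pinj _ _ Hl).
move Ep: (y :: p') Hsz Hp Hl => p Hsz Hp Hl.
pose img := fun v => v \in codom Phi.
have Hhas : has img p.
  apply/hasP; exists (Phi j); last by apply/codomP; exists j.
  by rewrite -Hl -Ep /= mem_last.
set t := find img p.
have tlt : t < size p by rewrite -has_find.
have /codomP [k' Hk'] := nth_find (Phi k) Hhas.
have Hcnt : t <= count (fun v => v \notin codom Phi) p.
  rewrite -(cat_take_drop t p) count_cat.
  have -> : count (fun v => v \notin codom Phi) (take t p) = t.
    by rewrite -[RHS](count_take_find _ img p).
  exact: leq_addr.
have [qt|tq] := leqP q t; first by left; exact: leq_trans qt Hcnt.
have Htk : last (Phi k) (take t.+1 p) = Phi k' by rewrite (take_nth (Phi k) tlt) last_rcons.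
clearbody t.
have Esz : size p = t.+1 + size (drop t.+1 p) by rewrite size_drop; lia.
have Ecnt : count (fun v => v \notin codom Phi) p = count (fun v => v \notin codom Phi) (take t.+1 p) + count (fun v => v \notin codom Phi) (drop t.+1 p) by rewrite -count_cat cat_take_drop.
have Hsplit := cat_take_drop t.+1 p.
have Hsz1 : size (take t.+1 p) = t.+1 by rewrite size_take; case: ltnP => // h; apply/eqP; rewrite eqn_leq h tlt.
have Dkk : D k k' <= t.+1.
  have [_ Hmin] := Gd k k'; rewrite -Hsz1; apply: Hmin => //; exact: take_path.
have : path e (Phi k) (take t.+1 p ++ drop t.+1 p) by rewrite Hsplit.
rewrite cat_path Htk => /andP [_ Hp2].
have : last (Phi k) (take t.+1 p ++ drop t.+1 p) = Phi j by rewrite Hsplit.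
rewrite last_cat Htk => Hl2.
have Hsz2 : size (drop t.+1 p) <= N by rewrite size_drop; move: Hsz tlt; lia.
case: (IH _ Hsz2 k' Hp2 Hl2) => [Hc|[w [Hw Hww]]].
  by left; apply: leq_trans Hc _; rewrite Ecnt leq_addl.
right; have [Ekk|nkk] := eqVneq k k'.
  exists w; rewrite Ekk; split => //; rewrite Esz; apply: leq_trans Hww _; exact: leq_addl.
exists (k' :: w); split.
  move: Hw; rewrite /skel_walk /= /skel_edge nkk /=.
  by rewrite (leq_trans Dkk tq).
rewrite /= Esz; exact: leq_add.
Qed.

Theorem mainTheorem10 (n : nat) (D : 'M[nat]_n) (q0 : nat) :
  is_distance_matrix D ->
  skeleton_reproduces D q0 ->
  (forall q, q < q0 -> ~ skeleton_reproduces D q) ->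
  forall (V : finType) (e : rel V) (Phi : 'I_n -> V),
    graph_realisation D e Phi ->
    n + q0 - 1 <= #|V|.
Proof.
move=> HD _ Hmin V e Phi [_ Pinj Gd].
pose A := [set v in codom Phi].
have cA : #|A| = n by rewrite cardsE card_codom // card_ord.
case: q0 Hmin => [|q] Hmin.
  have := max_card A; rewrite cA; lia.
have [i [j Hij]] : exists i j, ~ skel_dist_is D q i j (Some (D i j)).
  apply: NNPP => H; apply: (Hmin q (ltnSn q)) => i j; apply: NNPP => H'; apply: H; by exists i, j.
have [[p [Hp [Hl Hs]]] Gmin] := Gd i j.
move: Hl; case: (shortenP Hp) => p' Hp' Hu Hsub Hl'.
have Hsz : size p' <= D i j.
  rewrite -Hs; move: (Hu); rewrite cons_uniq => /andP [_ /card_uniqP <-].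
  apply: leq_trans (card_size p); apply: subset_leq_card; apply/subsetP => v; exact: Hsub.
case: (key n D V e Phi q j Pinj Gd p' i Hp' Hl') => [Hc|[w [Hw Hww]]]; last first.
  exfalso; apply: Hij; move: (Hw) => /andP [_ /eqP Hwl].
  have Hge := walk_weight_ge n D HD w i; rewrite Hwl in Hge.
  split.
    exists w; split => //; apply/eqP; rewrite eqn_leq Hge andbT; exact: leq_trans Hww Hsz.
  move=> w' /andP [_ /eqP Hwl']; have := walk_weight_ge n D HD w' i; by rewrite Hwl'.
pose s := filter (fun v => v \notin codom Phi) p'.
pose B := [set v in s].
have cB : #|B| = count (fun v => v \notin codom Phi) p'.
  rewrite cardsE -size_filter; apply/card_uniqP; apply: filter_uniq.
  by move: Hu; rewrite cons_uniq => /andP [].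
have AB : A :&: B = set0.
  apply/setP => v; rewrite !inE mem_filter; by case: (v \in codom Phi); rewrite ?andbF.
have := max_card (A :|: B); rewrite cardsU AB cards0 cA cB; lia.
Qed.
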